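(* Let $t_n>0$ be a sequence with $t_n\to 0$ and put $r_n=1/t_n$. For each $n$ let $(x_n,y_n,z_n)$ be a point of the model $\mathcal H_{t_n}$ of hyperbolic space described in the context, and let $C_n\subset\mathcal X_{t_n}$ be the corresponding curve, written in the form $$a^{00}_n+a^{10}_n\zeta-\tfrac{1}{t_n}\eta+a^{11}_n\zeta\eta=0 .$$ Suppose that $a^{00}_n$, $a^{11}_n$ and $a^{10}_n-1/t_n$ have finite limits $A^{00}$, $A^{11}$, $A^{10}$ respectively. Then $(x_n,y_n,z_n)$ converges in $\mathbb R^3$ to a point $(x,y,z)$, and $(x,y,z)$ is the point of Euclidean $\mathbb R^3$ whose associated curve in $\mathcal X_0=T\mathbb P^1$ is $w=A^{00}+A^{10}\zeta+A^{11}\zeta^2$.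
   Context: The complex 3-manifold $\mathcal X$ is obtained by gluing $U_0=\{(\zeta,w,t)\in\mathbb C^3:\ |\zeta|^2+tw\bar\zeta+1\neq0\}$ and $U_1=\{(\tilde\zeta,\tilde w,\tilde t)\in\mathbb C^3:\ |\tilde\zeta|^2+\tilde t\tilde w\bar{\tilde\zeta}+1\neq 0\}$ over $\zeta,\tilde\zeta\ne0$, $\zeta+tw\neq0$, $\tilde\zeta+\tilde t\tilde w\neq0$, via $\tilde\zeta=1/\zeta$, $\tilde w=-w/((\zeta+tw)\zeta)$, $\tilde t=t$. Let $\pi:\mathcal X\to\mathbb C$, $\pi(\zeta,w,t)=t$, and $\mathcal X_t=\pi^{-1}(t)$. Then $\mathcal X_0=T\mathbb P^1$ with $\zeta$ the affine coordinate on $\mathbb P^1$ and $w$ the fibre coordinate of $w\,\partial/\partial\zeta$. For $t\neq0$ put $\eta=\zeta+tw$ (and $\tilde\eta=\tilde\zeta+t\tilde w=1/\eta$); then $(\zeta,\eta)$ identify $\mathcal X_t$ with $\mathbb P^1\times\mathbb P^1-\overline\Delta$, where $\overline\Delta=\{(\zeta,-1/\bar\zeta)\}$ is the antidiagonal. The real structure is $\sigma(\zeta,w,t)=\bigl(-1/(\bar\zeta+\bar t\bar w),\ -\bar w/((\bar\zeta+\bar t\bar w)\bar\zeta),\ \bar t\bigr)$, i.e. $\sigma(\zeta,\eta,t)=(-1/\bar\eta,-1/\bar\zeta,\bar t)$ for $t\ne0$. For $t>0$ and $r=1/t$, let $\mathcal H_t=\{(x,y,z)\in\mathbb R^3: z>-r\}$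 with metric $\frac{r^2}{(z+r)^2}(dx^2+dy^2+dz^2)$ (a hyperbolic space of constant curvature determined by $t$, tending to Euclidean $\mathbb R^3$ as $t\to0$). The point $(x,y,z)\in\mathcal H_t$ corresponds to the $\sigma$-invariant $(1,1)$-curve in $\mathcal X_t$ $$(x+iy)+2z\zeta-(x-iy)\zeta\eta+r(\zeta-\eta)+\frac{x^2+y^2+z^2}{r}\zeta=0 .$$ A point $(x,y,z)$ of Euclidean $\mathbb R^3$ corresponds to the curve $w=(x+iy)+2z\zeta-(x-iy)\zeta^2$ in $T\mathbb P^1=\mathcal X_0$. *)

(* Defs.v *)
From Stdlib Require Import Reals.
Open Scope R_scope.

(* complex numbers a + i b as (a, b) *)
Definition Cx : Type := (R * R)%type.
Definition RtoC (a : R) : Cx := (a, 0).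
Definition Cadd (u v : Cx) : Cx := (fst u + fst v, snd u + snd v).
Definition Copp (u : Cx) : Cx := (- fst u, - snd u).
Definition Csub (u v : Cx) : Cx := Cadd u (Copp v).
Definition Cmul (u v : Cx) : Cx :=
  (fst u * fst v - snd u * snd v, fst u * snd v + snd u * fst v).

Definition Cconv (u : nat -> Cx) (l : Cx) : Prop :=
  Un_cv (fun n => fst (u n)) (fst l) /\ Un_cv (fun n => snd (u n)) (snd l).

(* Left-hand side of the equation of the sigma-invariant (1,1)-curve in X_t
   (coordinates (zeta, eta)) associated to the point (x,y,z) of H_t, r = 1/t:
   (x+iy) + 2 z zeta - (x-iy) zeta eta + r (zeta - eta)
          + (x^2+y^2+z^2)/r zeta *)
Definition hyp_curve (t x y z : R) (zeta eta : Cx) : Cx :=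
  let r := / t in
  Cadd (Cadd (Cadd (Cadd ((x, y)) (Cmul (RtoC (2 * z)) zeta))
                   (Copp (Cmul (x, - y) (Cmul zeta eta))))
             (Cmul (RtoC r) (Csub zeta eta)))
       (Cmul (RtoC ((x * x + y * y + z * z) / r)) zeta).

(* Right-hand side w(zeta) of the curve w = (x+iy) + 2 z zeta - (x-iy) zeta^2
   in T P^1 = X_0 associated to the point (x,y,z) of Euclidean R^3. *)
Definition euc_curve (x y z : R) (zeta : Cx) : Cx :=
  Cadd (Cadd ((x, y)) (Cmul (RtoC (2 * z)) zeta))
       (Copp (Cmul (x, - y) (Cmul zeta zeta))).

Definition normal_form (t : R) (a00 a10 a11 zeta eta : Cx) : Cx :=
  Cadd (Cadd (Cadd a00 (Cmul a10 zeta)) (Copp (Cmul (RtoC (/ t)) eta)))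
       (Cmul a11 (Cmul zeta eta)).

(* Main.v *)
Require Import Defs.
From Stdlib Require Import Reals Lra.
Open Scope R_scope.

Lemma cont_f : continuity_pt (fun u => / (sqrt u + 1)) 1.
Proof.
  apply continuity_pt_inv.
  - apply continuity_pt_plus. apply continuity_pt_sqrt; lra. apply continuity_pt_const; intros ? ?; reflexivity.
  - rewrite sqrt_1; lra.
Qed.

Theorem mainTheorem1
  (t x y z : nat -> R) (a00 a10 a11 : nat -> Cx) (A00 A10 A11 : Cx) :
  (forall n, 0 < t n) ->
  Un_cv t 0 ->
  (* (x_n, y_n, z_n) is a point of H_{t_n} *)
  (forall n, - / t n < z n) ->
  (* C_n is written as a00_n + a10_n zeta - (1/t_n) eta + a11_n zeta eta = 0 *)
  (forall n zeta eta,
      hyp_curve (t n) (x n) (y n) (z n) zeta eta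
      = normal_form (t n) (a00 n) (a10 n) (a11 n) zeta eta) ->
  Cconv a00 A00 ->
  Cconv (fun n => Csub (a10 n) (RtoC (/ t n))) A10 ->
  Cconv a11 A11 ->
  exists X Y Z : R,
    Un_cv x X /\ Un_cv y Y /\ Un_cv z Z /\
    (forall zeta : Cx,
        euc_curve X Y Z zeta
        = Cadd (Cadd A00 (Cmul A10 zeta)) (Cmul A11 (Cmul zeta zeta))).
Proof.
  intros Ht Ht0 Hz H [H00a H00b] [H10a H10b] [H11a H11b].
  assert (E : forall n, fst (a00 n) = x n /\ snd (a00 n) = y n /\
     fst (a10 n) - / t n = 2 * z n + t n * (x n * x n + y n * y n + z n * z n)
     /\ snd (a10 n) - 0 = 0 /\ fst (a11 n) = - x n /\ snd (a11 n) = y n).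
  { intro n. pose proof (Ht n) as tp.
    pose proof (H n (0,0) (0,0)) as E1.
    pose proof (H n (1,0) (0,0)) as E2.
    pose proof (H n (1,0) (1,0)) as E3.
    unfold hyp_curve, normal_form, Cadd, Cmul, Copp, Csub, RtoC in E1, E2, E3.
    simpl in E1, E2, E3.
    injection E1; injection E2; injection E3; clear E1 E2 E3.
    unfold Rdiv in *; rewrite ?Rinv_inv in *.
    intros; repeat split; nra. }
  set (X := fst A00). set (Y := snd A00).
  assert (Hx : Un_cv x X).
  { apply Un_cv_ext with (fun n => fst (a00 n)); [intro n; apply E | exact H00a]. }
  assert (Hy : Un_cv y Y).
  { apply Un_cv_ext with (fun n => snd (a00 n)); [intro n; apply E | exact H00b]. }
  set (w := fun n => fst (a10 n) - / t n).
  set (q := fun n => x n * x n + y n * y n).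
  set (D := fun n => 1 - t n * t n * q n + t n * w n).
  assert (Hw : Un_cv w (fst A10)) by exact H10a.
  assert (Hq : Un_cv q (X * X + Y * Y)).
  { apply CV_plus; apply CV_mult; assumption. }
  assert (HD : Un_cv D 1).
  { replace 1 with (1 - 0 * 0 * (X * X + Y * Y) + 0 * fst A10) by ring.
    apply CV_plus. apply CV_minus. intros e He; exists 0%nat; intros; unfold R_dist; rewrite Rminus_diag, Rabs_R0; lra.
    apply CV_mult; [apply CV_mult|]; assumption. apply CV_mult; assumption. }
  assert (Zeq : forall n, z n = (w n - t n * q n) * / (sqrt (D n) + 1)).
  { intro n. pose proof (Ht n) as tp. pose proof (Hz n) as hz.
    destruct (E n) as (_ & _ & E3 & _).
    assert (Dn : D n = (1 + t n * z n) ^ 2).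
    { unfold D, q, w. rewrite E3. ring. }
    assert (P : 0 < 1 + t n * z n).
    { apply Rmult_lt_compat_l with (r := t n) in hz; auto.
      rewrite Ropp_mult_distr_r_reverse, Rinv_r in hz; lra. }
    rewrite Dn, sqrt_pow2 by lra.
    unfold w, q. rewrite E3. field. lra. }
  assert (Hzc : Un_cv z (fst A10 / 2)).
  { apply Un_cv_ext with (fun n => (w n - t n * q n) * / (sqrt (D n) + 1)).
    intro n; symmetry; apply Zeq.
    replace (fst A10 / 2) with ((fst A10 - 0 * (X * X + Y * Y)) * / (sqrt 1 + 1))
      by (rewrite sqrt_1; field).
    apply CV_mult. apply CV_minus; [assumption| apply CV_mult; assumption].
    apply (continuity_seq (fun u => / (sqrt u + 1))); [apply cont_f | exact HD]. }
  exists X, Y, (fst A10 / 2). split; [|split; [|split]]; try assumption.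
  assert (B0 : snd A10 = 0).
  { apply UL_sequence with (fun n => snd (Csub (a10 n) (RtoC (/ t n)))). exact H10b.
    apply Un_cv_ext with (fun _ => 0). intro n. unfold Csub, Cadd, Copp, RtoC; simpl.
    destruct (E n) as (_ & _ & _ & E4 & _). lra.
    intros e He; exists 0%nat; intros; unfold R_dist; rewrite Rminus_diag, Rabs_R0; lra. }
  assert (B1 : fst A11 = - X).
  { apply UL_sequence with (fun n => fst (a11 n)). exact H11a.
    apply Un_cv_ext with (fun n => - x n). intro n; symmetry; apply E.
    apply CV_opp; exact Hx. }
  assert (B2 : snd A11 = Y).
  { apply UL_sequence with (fun n => snd (a11 n)). exact H11b.
    apply Un_cv_ext with y. intro n; symmetry; apply E. exact Hy. }
  intros [u v]. destruct A00 as [a b], A10 as [c d], A11 as [e f].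
  unfold X, Y in *; simpl in *. subst.
  unfold euc_curve, Cadd, Cmul, Copp, RtoC; simpl. f_equal; field.
Qed.
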